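(* Let $X=\{a,b\}$ and consider the following commutative Frobenius objects in $\mathbf{Rel}$ on $X$: (1) $\eta=\varepsilon=\{a\}$, $\tilde\mu(a,a)=\{a\}$, $\tilde\mu(a,b)=\tilde\mu(b,a)=\{b\}$, $\tilde\mu(b,b)=\{a\}$; (2) $\eta=\varepsilon=\{a\}$, same as (1) except $\tilde\mu(b,b)=\{a,b\}$; (3) $\eta=\{a\}$, $\varepsilon=\{b\}$, $\tilde\mu(a,a)=\{a\}$, $\tilde\mu(a,b)=\tilde\mu(b,a)=\{b\}$, $\tilde\mu(b,b)=\{a\}$; (4) $\eta=\{a\}$, $\varepsilon=\{b\}$, same as (3) except $\tilde\mu(b,b)=\emptyset$; (5) $\eta=\varepsilon=\{a,b\}$, $\tilde\mu(a,a)=\{a\}$, $\tilde\mu(b,b)=\{b\}$, $\tilde\mu(a,b)=\tilde\mu(b,a)=\emptyset$. Then, for integers $g\ge 0$, their partition functions are: for (1), (2), (5), $Z(\Sigma_g)=T$ for all $g$; for (3), $Z(\Sigma_g)=T$ if and only if $g$ is odd; for (4), $Z(\Sigma_g)=T$ if and only if $g=1$.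
   Context: $\mathbf{Rel}$ is the symmetric monoidal category of sets and relations ($S\circ R=\{(x,z):\exists y,(x,y)\in R,(y,z)\in S\}$, identities are diagonals, product is Cartesian product, unit $\{\bullet\}$). A relation $R\subseteq X\times Y$ is identified with $\tilde R:X\to\mathcal{P}(Y)$. A Frobenius object in $\mathbf{Rel}$ is a set $X$ with unit $\eta\subseteq X$ (relation $\{\bullet\}\to X$), counit $\varepsilon\subseteq X$ (relation $X\to\{\bullet\}$) and multiplication $\mu$ (relation $X\times X\to X$, with map $\tilde\mu$) satisfying unitality, associativity, and nondegeneracy: there is a (unique) relation $\beta:\{\bullet\}\to X\times X$ with $(\varepsilon\times\mathbf{1})\circ(\mu\times\mathbf{1})\circ(\mathbf{1}\times\beta)=(\mathbf{1}\times\varepsilon)\circ(\mathbf{1}\times\mu)\circ(\beta\times\mathbf{1})=\mathbf{1}$. The comultiplication is $\delta=(\mathbf{1}\times\mu)\circ(\beta\times\mathbf{1})$. Commutative means $\tilde\mu(x,y)=\tilde\mu(y,x)$. The partition function on the closed orientable surface of genus $g$ is $Z(\Sigma_g)=\varepsilon\circ(\mu\circ\delta)^g\circ\eta\in\{\emptyset,\{\bullet\}\}$, with $\emptyset$ read as $F$ and $\{\bullet\}$ as $T$. *)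

(* Defs.v *)
(* The one-point set {•} is [unit]; the monoidal product is the Cartesian
   product [A * B], with the structural isomorphisms of Rel made explicit. *)

Definition rel (A B : Type) := A -> B -> Prop.

Definition comp {A B C : Type} (S : rel B C) (R : rel A B) : rel A C :=
  fun x z => exists y, R x y /\ S y z.

Definition idr (A : Type) : rel A A := fun x y => x = y.

Definition tens {A B C D : Type} (R : rel A B) (S : rel C D) : rel (A * C) (B * D) :=
  fun p q => R (fst p) (fst q) /\ S (snd p) (snd q).

Definition rel_eq {A B : Type} (R S : rel A B) : Prop :=
  forall x y, R x y <-> S x y.

Definition graph {A B : Type} (f : A -> B) : rel A B := fun x y => f x = y.

Definition lunit (A : Type) : rel (unit * A) A := graph (@snd unit A).
Definition lunit_inv (A : Type) : rel A (unit * A) := graph (fun x => (tt, x)).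
Definition runit (A : Type) : rel (A * unit) A := graph (@fst A unit).
Definition runit_inv (A : Type) : rel A (A * unit) := graph (fun x => (x, tt)).
Definition assoc (A B C : Type) : rel ((A * B) * C) (A * (B * C)) :=
  graph (fun p => (fst (fst p), (snd (fst p), snd p))).
Definition assoc_inv (A B C : Type) : rel (A * (B * C)) ((A * B) * C) :=
  graph (fun p => ((fst p, fst (snd p)), snd (snd p))).

Record FrobData (X : Type) := mkFrob {
  eta : rel unit X;
  eps : rel X unit;
  mu  : rel (X * X) X }.
Arguments eta {X}. Arguments eps {X}. Arguments mu {X}.

Section Frob.
Variable X : Type.
Variable F : FrobData X.

Definition unital : Prop :=
  rel_eq (comp (mu F) (comp (tens (eta F) (idr X)) (lunit_inv X))) (idr X) /\
  rel_eq (comp (mu F) (comp (tens (idr X) (eta F)) (runit_inv X))) (idr X).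

Definition associative : Prop :=
  rel_eq (comp (mu F) (tens (mu F) (idr X)))
         (comp (mu F) (comp (tens (idr X) (mu F)) (assoc X X X))).

Definition nondeg (beta : rel unit (X * X)) : Prop :=
  rel_eq
    (comp (lunit X) (comp (tens (eps F) (idr X)) (comp (tens (mu F) (idr X))
       (comp (assoc_inv X X X) (comp (tens (idr X) beta) (runit_inv X))))))
    (idr X) /\
  rel_eq
    (comp (runit X) (comp (tens (idr X) (eps F)) (comp (tens (idr X) (mu F))
       (comp (assoc X X X) (comp (tens beta (idr X)) (lunit_inv X))))))
    (idr X).

Definition is_frobenius : Prop :=
  unital /\ associative /\ exists beta, nondeg beta.

Definition commutative : Prop :=
  forall x y z, mu F (x, y) z <-> mu F (y, x) z.

Definition delta (beta : rel unit (X * X)) : rel X (X * X) :=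
  comp (tens (idr X) (mu F)) (comp (assoc X X X) (comp (tens beta (idr X)) (lunit_inv X))).

(* Z(Σ_g) = ε ∘ (μ ∘ δ)^g ∘ η : a relation {•} -> {•};
   it is T iff it contains (•,•). *)
Definition Zrel (beta : rel unit (X * X)) (g : nat) : rel unit unit :=
  comp (eps F) (comp (Nat.iter g (comp (comp (mu F) (delta beta))) (idr X)) (eta F)).

Definition Z (beta : rel unit (X * X)) (g : nat) : Prop := Zrel beta g tt tt.

End Frob.
Arguments unital {X}. Arguments associative {X}. Arguments nondeg {X}.
Arguments is_frobenius {X}. Arguments commutative {X}. Arguments delta {X}.
Arguments Zrel {X}. Arguments Z {X}.

Inductive AB : Type := a | b.

Definition sa : AB -> Prop := fun x => x = a.
Definition sb : AB -> Prop := fun x => x = b.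
Definition sab : AB -> Prop := fun _ => True.
Definition s0 : AB -> Prop := fun _ => False.

Definition unit_rel (S : AB -> Prop) : rel unit AB := fun _ x => S x.
Definition counit_rel (S : AB -> Prop) : rel AB unit := fun x _ => S x.
Definition mul_rel (maa mab mba mbb : AB -> Prop) : rel (AB * AB) AB :=
  fun p z => match p with
             | (a, a) => maa z | (a, b) => mab z
             | (b, a) => mba z | (b, b) => mbb z end.

Definition F1 : FrobData AB := mkFrob AB (unit_rel sa) (counit_rel sa) (mul_rel sa sb sb sa).
Definition F2 : FrobData AB := mkFrob AB (unit_rel sa) (counit_rel sa) (mul_rel sa sb sb sab).
Definition F3 : FrobData AB := mkFrob AB (unit_rel sa) (counit_rel sb) (mul_rel sa sb sb sa).
Definition F4 : FrobData AB := mkFrob AB (unit_rel sa) (counit_rel sb) (mul_rel sa sb sb s0).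
Definition F5 : FrobData AB := mkFrob AB (unit_rel sab) (counit_rel sab) (mul_rel sa s0 s0 sb).

(* F is a commutative Frobenius object and, for the (unique) β witnessing
   nondegeneracy, Z(Σ_g) = T iff P g *)
Definition partition_fn_is {X : Type} (F : FrobData X) (P : nat -> Prop) : Prop :=
  is_frobenius F /\ commutative F /\
  forall beta, nondeg F beta -> forall g : nat, Z F beta g <-> P g.

(* Main.v *)
Require Import Defs.
From Stdlib Require Import FunctionalExtensionality PropExtensionality Arith.

Definition bdiag (p : AB * AB) : Prop :=
  match p with (a, a) | (b, b) => True | _ => False end.
Definition bswap (p : AB * AB) : Prop :=
  match p with (a, b) | (b, a) => True | _ => False end.

Definition swp (x : AB) : AB := match x with a => b | b => a end.

Lemma ex_prod {A B : Type} (P : A * B -> Prop) :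
  (exists x y, P (x, y)) -> exists p, P p.
Proof. intros [x [y H]]; eauto. Qed.

Ltac unf := cbv [comp idr tens rel_eq graph lunit lunit_inv runit runit_inv assoc assoc_inv
  eta eps mu F1 F2 F3 F4 F5 mul_rel sa sb sab s0 unit_rel counit_rel fst snd bdiag bswap swp
  unital associative nondeg is_frobenius commutative delta] in *.

Ltac clean := repeat (unf; match goal with
 | H : exists _, _ |- _ => destruct H
 | H : _ /\ _ |- _ => destruct H
 | H : True |- _ => clear H
 | H : False |- _ => destruct H
 | p : prod _ _ |- _ => destruct p
 | u : unit |- _ => destruct u
 | x : AB |- _ => destruct x
 | H : ?x = ?x |- _ => clear H
 | H : ?c = ?c -> _ |- _ => specialize (H eq_refl)
 | H : _ = _ |- _ => discriminate H
 | H : _ = _ |- _ => injection H; clear H; intros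
 end).

Ltac go := clean; unf; match goal with
 | |- True => exact I
 | |- ?x = ?x => reflexivity
 | |- _ /\ _ => split; go
 | |- _ <-> _ => split; intro; go
 | |- forall _, _ => intro; go
 | |- _ => progress intros; go
 | |- @ex (prod _ _) _ => apply ex_prod; go
 | |- @ex unit _ => exists tt; go
 | |- @ex AB _ => solve [exists a; go | exists b; go]
 | _ => assumption
 end.


Ltac dir1 := unf; match goal with
  | |- True => exact I
  | Hb : ?beta tt (_, ?y) |- False => match goal with H : _ -> ?c = y |- _ =>
        assert (c <> y) by discriminate;
        assert (c = y) by (apply H; clear H; go); discriminate end end.
Ltac dir2 := unf; match goal with
  | H : False |- _ => destruct H
  | |- ?beta tt (_, ?y) => match goal with H : y = y -> _ |- _ =>
        let HH := fresh in pose proof (H eq_refl) as HH; clear -HH; go end end.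

Ltac getbeta B := intros beta [H1 _]; unf;
  destruct (H1 a a) as [Haa1 Haa2]; destruct (H1 a b) as [Hab1 Hab2];
  destruct (H1 b a) as [Hba1 Hba2]; destruct (H1 b b) as [Hbb1 Hbb2]; clear H1;
  assert (Hb : forall p, beta tt p <-> B p) by
    (intros [[|] [|]]; (split; [intro H; clear Haa2 Hab2 Hba2 Hbb2; dir1 | intro H; clear Haa1 Hab1 Hba1 Hbb1; dir2]));
  assert (beta = fun _ => B) by (apply functional_extensionality; intros []; apply functional_extensionality; intro;
     apply propositional_extensionality; apply Hb);
  subst beta; clear Hb Haa1 Haa2 Hab1 Hab2 Hba1 Hba2 Hbb1 Hbb2.

Lemma iter_refl (h : rel AB AB) : h a a -> forall g, Nat.iter g (comp h) (idr AB) a a.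
Proof. intros H g; induction g; simpl. reflexivity. exists a; split; assumption. Qed.

Lemma iter_fun (h : rel AB AB) (f : AB -> AB) :
  (forall x y, h x y <-> y = f x) ->
  forall g x y, Nat.iter g (comp h) (idr AB) x y <-> y = Nat.iter g f x.
Proof.
  intros H g; induction g; intros x y; simpl.
  - unfold idr; split; auto.
  - unfold comp; split.
    + intros [m [H1 H2]]. apply IHg in H1. apply H in H2. subst. reflexivity.
    + intros ->. exists (Nat.iter g f x). split. apply IHg; reflexivity. apply H; reflexivity.
Qed.

Lemma swp_odd g : Nat.iter g swp a = if Nat.odd g then b else a.
Proof.
  induction g. reflexivity.
  simpl Nat.iter. rewrite IHg, Nat.odd_succ, <- Nat.negb_odd.
  destruct (Nat.odd g); reflexivity.
Qed.

Lemma iter4 (h : rel AB AB) : (forall x y, h x y <-> x = a /\ y = b) ->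
  forall g y, Nat.iter g (comp h) (idr AB) a y <->
    match g with 0 => y = a | 1 => y = b | _ => False end.
Proof.
  intros H g; induction g; intros y; simpl.
  - unfold idr; split; auto.
  - unfold comp; split.
    + intros [m [H1 H2]]. apply IHg in H1. apply H in H2. destruct H2; subst.
      destruct g as [|[|g]]; [reflexivity | discriminate | destruct H1].
    + intro Hy. destruct g as [|[|g]]; [|destruct Hy|destruct Hy].
      subst. exists a. split. apply IHg. reflexivity. apply H; auto.
Qed.

Lemma P1 : partition_fn_is F1 (fun _ => True).
Proof.
  split; [split; [|split; [|exists (fun _ => bdiag)]]|split]; [go..|].
  getbeta bdiag. intro g. split; intros _; [exact I|].
  unfold Z, Zrel. exists a; split; [exists a; split; [unf; reflexivity|apply iter_refl; go]|unf; reflexivity].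
Qed.

Lemma P2 : partition_fn_is F2 (fun _ => True).
Proof.
  split; [split; [|split; [|exists (fun _ => bdiag)]]|split]; [go..|].
  getbeta bdiag. intro g. split; intros _; [exact I|].
  unfold Z, Zrel. exists a; split; [exists a; split; [unf; reflexivity|apply iter_refl; go]|unf; reflexivity].
Qed.

Lemma P5 : partition_fn_is F5 (fun _ => True).
Proof.
  split; [split; [|split; [|exists (fun _ => bdiag)]]|split]; [go..|].
  getbeta bdiag. intro g. split; intros _; [exact I|].
  unfold Z, Zrel. exists a; split; [exists a; split; [unf; exact I|apply iter_refl; go]|unf; exact I].
Qed.

Lemma P3 : partition_fn_is F3 (fun g => Nat.odd g = true).
Proof.
  split; [split; [|split; [|exists (fun _ => bswap)]]|split]; [go..|].
  getbeta bswap. intro g.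
  assert (Hh : forall x y, comp (mu F3) (delta F3 (fun _ => bswap)) x y <-> y = swp x) by go.
  pose proof (iter_fun _ _ Hh g) as Hi. pose proof (swp_odd g) as Ho.
  unfold Z, Zrel. split.
  - intros [y [[x [Hx Hxy]] Hy]]. unf. subst. apply Hi in Hxy. rewrite Ho in Hxy.
    destruct (Nat.odd g); [reflexivity|discriminate].
  - intros Hg. exists b. split; [exists a; split; [unf; reflexivity| apply Hi; rewrite Ho, Hg; reflexivity]|unf; reflexivity].
Qed.

Lemma P4 : partition_fn_is F4 (fun g => g = 1).
Proof.
  split; [split; [|split; [|exists (fun _ => bswap)]]|split]; [go..|].
  getbeta bswap. intro g.
  assert (Hh : forall x y, comp (mu F4) (delta F4 (fun _ => bswap)) x y <-> x = a /\ y = b) by go.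
  pose proof (iter4 _ Hh g) as Hi.
  unfold Z, Zrel. split.
  - intros [y [[x [Hx Hxy]] Hy]]. unf. subst. apply Hi in Hxy.
    destruct g as [|[|g]]; [discriminate|reflexivity|destruct Hxy].
  - intros ->. exists b. split; [exists a; split; [unf; reflexivity| apply Hi; reflexivity]|unf; reflexivity].
Qed.

Theorem mainTheorem5 :
  partition_fn_is F1 (fun _ => True) /\
  partition_fn_is F2 (fun _ => True) /\
  partition_fn_is F3 (fun g => Nat.odd g = true) /\
  partition_fn_is F4 (fun g => g = 1) /\
  partition_fn_is F5 (fun _ => True).
Proof. exact (conj P1 (conj P2 (conj P3 (conj P4 P5)))). Qed.
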